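(* Let $G_{\|v_0}$ be a well-initialized prefix-independent game, let $\epsilon\ge0$ and let $\bar\sigma$ be an $\epsilon$-SPE in $G_{\|v_0}$. Then there exists an $\epsilon$-fixed point $\lambda$ of the negotiation function such that for every history $hv$ of $G_{\|v_0}$, the play $\langle\bar\sigma_{\|hv}\rangle_v$ is $\lambda$-consistent.
   Context: A game is a tuple $G=(\Pi,V,(V_i)_{i\in\Pi},E,\mu)$ where $\Pi$ is a finite set of players, $(V,E)$ is a finite directed graph in which every vertex has at least one outgoing edge, $(V_i)_{i\in\Pi}$ is a partition of $V$, and $\mu:V^\omega\to\mathbb{R}^\Pi$ is the outcome function. Plays, histories, strategies, profiles, compatibility and $\langle\bar\sigma\rangle_v$ are as usual; $G_{\|v_0}$ is $G$ initialized at $v_0$ and is well-initialized if every vertex is reachable from $v_0$ in $(V,E)$; $-i$ denotes $\Pi\setminus\{i\}$; $\bar\sigma_{\|hv}$ is the profile in $G_{\|v}$ with $\sigma_{j\|hv}(h')=\sigma_j(hh')$. $G$ is prefix-independent if $\mu(h\rho)=\mu(\rho)$ for every history $h$ and play $\rho$. A profile $\bar\sigma$ in $G_{\|v_0}$ is an $\epsilon$-SPE if for every history $hv$ of $G_{\|v_0}$, every player $i$ and strategy $\sigma'_i$, $\mu_i(h\langle\bar\sigma_{-i\|hv},\sigma'_{i\|hv}\rangle_v)\le\mu_i(h\langle\bar\sigma_{\|hv}\rangle_v)+\epsilon$. A requirement is a map $\lambda:V\to\mathbb{R}\cup\{\pm\infty\}$. A play $\rho$ is $\lambda$-consistent if for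 every $i\in\Pi$ and $n$ with $\rho_n\in V_i$, $\mu_i(\rho_n\rho_{n+1}\cdots)\ge\lambda(\rho_n)$. $\lambda\mathrm{Rat}_i(v)$ is the set of profiles $\bar\sigma_{-i}$ in $G_{\|v}$ for which there exists $\sigma_i$ such that for every history $hw$ from $v$ compatible with $\bar\sigma_{-i}$, $\langle\bar\sigma_{\|hw}\rangle_w$ is $\lambda$-consistent. For $i\in\Pi$, $v\in V_i$: $\mathrm{nego}(\lambda)(v)=\inf_{\bar\sigma_{-i}\in\lambda\mathrm{Rat}_i(v)}\sup_{\sigma_i}\mu_i(\langle\bar\sigma_{-i},\sigma_i\rangle_v)$, $\inf\emptyset=+\infty$. $\lambda$ is an $\epsilon$-fixed point of $\mathrm{nego}$ if $\lambda(v)-\epsilon\le\mathrm{nego}(\lambda)(v)\le\lambda(v)+\epsilon$ for all $v$ (with $\pm\infty\pm\epsilon=\pm\infty$). *)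

(* Defs.v *)
From Stdlib Require Import Reals List Relations.
From Coquelicot Require Import Rbar Lub.
Import ListNotations.
Open Scope R_scope.

Record Game := mkGame {
  Pl : Type;
  Pl_finite : exists l : list Pl, forall i, In i l;
  Pl_eq_dec : forall i j : Pl, {i = j} + {i <> j};
  Vx : Type;
  V_finite : exists l : list Vx, forall v, In v l;
  owner : Vx -> Pl;                       (* v \in V_i  <->  owner v = i *)
  Edge : Vx -> Vx -> Prop;
  Edge_total : forall v, exists w, Edge v w;
  mu : (nat -> Vx) -> Pl -> R }.

Section GameDefs.
Variable G : Game.
Local Notation V := (Vx G).
Local Notation P := (Pl G).

Definition is_play (rho : nat -> V) : Prop := forall n, Edge G (rho n) (rho (S n)).

Fixpoint is_path (h : list V) : Prop :=
  match h with
  | [] => True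
  | x :: t => match t with [] => True | y :: _ => Edge G x y /\ is_path t end
  end.

Definition is_history (h : list V) : Prop := h <> [] /\ is_path h.

Definition is_history_from (v : V) (h : list V) : Prop :=
  is_path h /\ hd_error h = Some v.

(* strategies are total maps on finite sequences; validity: whenever the last
   vertex w belongs to player i, the chosen vertex is a successor of w *)
Definition strategy := list V -> V.
Definition profile := P -> strategy.

Definition valid_strategy (i : P) (s : strategy) : Prop :=
  forall h w, owner G w = i -> Edge G w (s (h ++ [w])).
Definition valid_profile (sg : profile) : Prop := forall i, valid_strategy i (sg i).
(* a profile sigma_{-i}, represented by a full profile whose i-component is ignored *)
Definition valid_profile_except (i : P) (sg : profile) : Prop :=
  forall j, j <> i -> valid_strategy j (sg j).

Definition dev (sg : profile) (i : P) (s : strategy) : profile :=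
  fun j => if Pl_eq_dec G j i then s else sg j.

(* sigma_{|hv}: sigma_{j|hv}(h') = sigma_j(h h'), h' a history from v *)
Definition restrict_s (s : strategy) (h : list V) : strategy := fun h' => s (h ++ h').
Definition restrict (sg : profile) (h : list V) : profile :=
  fun j => restrict_s (sg j) h.

Fixpoint out_pref (sg : profile) (v : V) (n : nat) : list V :=
  match n with
  | O => [v]
  | S m => let p := out_pref sg v m in p ++ [sg (owner G (last p v)) p]
  end.
Definition outcome (sg : profile) (v : V) : nat -> V :=
  fun n => last (out_pref sg v n) v.

Definition app_play (h : list V) (rho : nat -> V) : nat -> V :=
  fun n => if Nat.ltb n (length h) then nth n h (rho O) else rho (n - length h)%nat.

Definition suffix (rho : nat -> V) (n : nat) : nat -> V := fun k => rho (n + k)%nat.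

Definition prefix_independent : Prop :=
  forall (h : list V) (rho : nat -> V),
    is_history h -> is_play rho -> Edge G (last h (rho O)) (rho O) ->
    forall i, mu G (app_play h rho) i = mu G rho i.

Definition well_initialized (v0 : V) : Prop :=
  forall v, clos_refl_trans V (Edge G) v0 v.

Definition eps_SPE (eps : R) (v0 : V) (sg : profile) : Prop :=
  valid_profile sg /\
  forall (h : list V) (v : V), is_history_from v0 (h ++ [v]) ->
  forall (i : P) (s' : strategy), valid_strategy i s' ->
    mu G (app_play h (outcome (dev (restrict sg h) i (restrict_s s' h)) v)) i
    <= mu G (app_play h (outcome (restrict sg h) v)) i + eps.

Definition requirement := V -> Rbar.

Definition consistent (lam : requirement) (rho : nat -> V) : Prop :=
  forall n, Rbar_le (lam (rho n)) (Finite (mu G (suffix rho n) (owner G (rho n)))).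

Definition compatible_except (i : P) (sg : profile) (hw : list V) : Prop :=
  forall pre u u' suf, hw = pre ++ u :: u' :: suf -> owner G u <> i ->
    u' = sg (owner G u) (pre ++ [u]).

Definition lamRat (lam : requirement) (i : P) (v : V) (sg : profile) : Prop :=
  valid_profile_except i sg /\
  exists s : strategy, valid_strategy i s /\
    forall (h : list V) (w : V), is_history_from v (h ++ [w]) ->
      compatible_except i sg (h ++ [w]) ->
      consistent lam (outcome (restrict (dev sg i s) h) w).

(* nego(lambda)(v) = inf_{sigma_{-i} in lamRat_i(v)} sup_{sigma_i} mu_i(<sigma_{-i},sigma_i>_v),
   with i the owner of v; inf of the empty set is +oo *)
Definition nego (lam : requirement) (v : V) : Rbar :=
  let i := owner G v in
  Rbar_glb (fun x : Rbar => exists sg : profile, lamRat lam i v sg /\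
     x = Lub_Rbar (fun r : R => exists s : strategy, valid_strategy i s /\
                                   r = mu G (outcome (dev sg i s) v) i)).

Definition eps_fixed_point (eps : R) (lam : requirement) : Prop :=
  forall v, Rbar_le (Rbar_plus (lam v) (Finite (- eps))) (nego lam v) /\
            Rbar_le (nego lam v) (Rbar_plus (lam v) (Finite eps)).

End GameDefs.

(* Main.v *)
Require Import Defs.
From Stdlib Require Import Reals List.
From Coquelicot Require Import Rbar Lub.
From Stdlib Require Import Relations Lra Lia Arith FunctionalExtensionality.
Import ListNotations.
Open Scope R_scope.

Lemma glb_correct (E : Rbar -> Prop) : Rbar_is_glb E (Rbar_glb E).
Proof. unfold Rbar_glb. destruct (Rbar_ex_glb E) as [l Hl]. exact Hl. Qed.

Section Aux.
Variable G : Game.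
Local Notation V := (Vx G).

Lemma out_pref_snoc (t : profile G) v n :
  exists pre, out_pref G t v n = pre ++ [outcome G t v n].
Proof.
  destruct n as [|n]. exists []. reflexivity.
  exists (out_pref G t v n). unfold outcome. cbn [out_pref]. rewrite last_last. reflexivity.
Qed.

Lemma outcome_S (t : profile G) v n :
  outcome G t v (S n) = t (owner G (outcome G t v n)) (out_pref G t v n).
Proof. unfold outcome at 1. cbn [out_pref]. rewrite last_last. reflexivity. Qed.

Lemma out_pref_cons (t : profile G) v n : exists l, out_pref G t v n = v :: l.
Proof.
  induction n as [|n [l E]]. exists []. reflexivity.
  cbn [out_pref]. rewrite E. eexists. reflexivity.
Qed.

Lemma out_pref_shift (t : profile G) v n pre x :
  out_pref G t v n = pre ++ [x] ->
  forall k, out_pref G t v (n + k)%nat = pre ++ out_pref G (restrict G t pre) x k.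
Proof.
  intros H k. induction k as [|k IH].
  - rewrite Nat.add_0_r. exact H.
  - rewrite Nat.add_succ_r. cbn [out_pref]. rewrite IH.
    destruct (out_pref_snoc (restrict G t pre) x k) as [pre' E]. rewrite E.
    rewrite !app_assoc, !last_last. unfold restrict, restrict_s.
    rewrite <- !app_assoc. reflexivity.
Qed.

Lemma outcome_shift (t : profile G) v n pre x :
  out_pref G t v n = pre ++ [x] ->
  forall k, outcome G t v (n + k)%nat = outcome G (restrict G t pre) x k.
Proof.
  intros H k. unfold outcome at 1. rewrite (out_pref_shift t v n pre x H).
  destruct (out_pref_snoc (restrict G t pre) x k) as [pre' E]. rewrite E.
  rewrite app_assoc, !last_last. reflexivity.
Qed.

Lemma is_path_prefix (l m : list V) : is_path G (l ++ m) -> is_path G l.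
Proof.
  induction l as [|a l IH]; intros H; simpl in *; auto.
  destruct l as [|b l]; simpl in *; intuition.
Qed.

Lemma is_path_app (h : list V) v t :
  is_path G (h ++ [v]) -> is_path G (v :: t) -> is_path G (h ++ v :: t).
Proof.
  induction h as [|a h IH]; intros H1 H2; simpl in *; auto.
  destruct h as [|b h]; simpl in *; intuition.
Qed.

Lemma edge_last (h : list V) v d :
  is_path G (h ++ [v]) -> h <> [] -> Edge G (last h d) v.
Proof.
  induction h as [|a h IH]; intros H1 H2. congruence.
  destruct h as [|b h]; simpl in *. tauto.
  destruct H1 as [_ H1]. apply IH; auto. discriminate.
Qed.

Lemma valid_restrict (t : profile G) h : valid_profile G t -> valid_profile G (restrict G t h).
Proof.
  intros Hv j h0 w Hw. unfold restrict, restrict_s. rewrite app_assoc. apply Hv; auto.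
Qed.

Lemma valid_dev (t : profile G) i s :
  valid_profile G t -> valid_strategy G i s -> valid_profile G (dev G t i s).
Proof.
  intros Hv Hs j. unfold dev. destruct (Pl_eq_dec G j i); subst; auto.
Qed.

Lemma out_pref_path (t : profile G) v n : valid_profile G t -> is_path G (out_pref G t v n).
Proof.
  intros Hv. induction n as [|n IH]. simpl; auto.
  cbn [out_pref]. destruct (out_pref_snoc t v n) as [pre E]. rewrite E in *.
  rewrite last_last, <- app_assoc. apply is_path_app; auto.
  simpl. split; auto. apply Hv. reflexivity.
Qed.

Lemma outcome_play (t : profile G) v : valid_profile G t -> is_play G (outcome G t v).
Proof.
  intros Hv n. rewrite outcome_S. destruct (out_pref_snoc t v n) as [pre E].
  rewrite E. apply Hv. reflexivity.
Qed.

Lemma out_pref_ext (t1 t2 : profile G) :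
  (forall j l, l <> [] -> t1 j l = t2 j l) -> forall v n, out_pref G t1 v n = out_pref G t2 v n.
Proof.
  intros H v n. induction n as [|n IH]. reflexivity.
  cbn [out_pref]. rewrite IH. f_equal. f_equal. apply H.
  destruct (out_pref_cons t2 v n) as [l E]. rewrite E. discriminate.
Qed.

Lemma outcome_ext (t1 t2 : profile G) :
  (forall j l, l <> [] -> t1 j l = t2 j l) -> forall v, outcome G t1 v = outcome G t2 v.
Proof.
  intros H v. apply functional_extensionality. intro n. unfold outcome.
  rewrite (out_pref_ext t1 t2 H). reflexivity.
Qed.

Lemma PI_use (h : list V) v rho :
  prefix_independent G -> is_path G (h ++ [v]) -> is_play G rho -> rho O = v ->
  forall i, mu G (app_play G h rho) i = mu G rho i.
Proof.
  intros PI Hp Hr H0 i. destruct h as [|a h].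
  - f_equal. apply functional_extensionality. intro n. unfold app_play. simpl.
    rewrite Nat.sub_0_r. reflexivity.
  - apply PI; auto. split. discriminate. exact (is_path_prefix _ _ Hp).
    rewrite H0. apply edge_last; auto. discriminate.
Qed.

Lemma hist_concat (v0 : V) h v t :
  is_history_from G v0 (h ++ [v]) -> is_path G (v :: t) -> is_history_from G v0 (h ++ v :: t).
Proof.
  intros [H1 H2] H3. split. apply is_path_app; auto.
  destruct h; simpl in *; auto.
Qed.

End Aux.

Theorem mainTheorem4 (G : Game) (v0 : Vx G) (eps : R) (sg : profile G) :
  well_initialized G v0 ->
  prefix_independent G ->
  0 <= eps ->
  eps_SPE G eps v0 sg ->
  exists lam : requirement G,
    eps_fixed_point G eps lam /\
    forall (h : list (Vx G)) (v : Vx G), is_history_from G v0 (h ++ [v]) ->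
      consistent G lam (outcome G (restrict G sg h) v).
Proof.
  intros _ PI Heps [Hval HSPE].
  set (lam := fun v : Vx G => Rbar_glb (fun x => exists h, is_history_from G v0 (h ++ [v]) /\
               x = Finite (mu G (outcome G (restrict G sg h) v) (owner G v)))).
  assert (Hcons : forall h v, is_history_from G v0 (h ++ [v]) ->
                  consistent G lam (outcome G (restrict G sg h) v)).
  { intros h v Hh n.
    destruct (out_pref_snoc G (restrict G sg h) v n) as [pre E].
    set (x := outcome G (restrict G sg h) v n) in *.
    assert (Hs : suffix G (outcome G (restrict G sg h) v) n = outcome G (restrict G sg (h ++ pre)) x).
    { apply functional_extensionality. intro k. unfold suffix.
      rewrite (outcome_shift G _ v n pre x E).
      f_equal. unfold restrict, restrict_s. apply functional_extensionality. intro j.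
      apply functional_extensionality. intro l. rewrite app_assoc. reflexivity. }
    rewrite Hs. apply (proj1 (glb_correct _)). exists (h ++ pre). split; auto.
    destruct (out_pref_cons G (restrict G sg h) v n) as [t Et].
    assert (Hp := out_pref_path G (restrict G sg h) v n (valid_restrict G sg h Hval)).
    rewrite <- app_assoc, <- E, Et. apply hist_concat; auto. rewrite <- Et. auto. }
  exists lam. split; [|exact Hcons].
  intro v. set (i := owner G v). split.
  -
    unfold nego. apply (proj2 (glb_correct _)). intros x [sg' [[Hv' [s [Hs Hc]]] ->]].
    assert (H0 := Hc [] v (conj I eq_refl)).
    assert (Hcomp : compatible_except G i sg' ([] ++ [v])).
    { intros pre u u' suf E. destruct pre as [|a [|b pre]]; simpl in E; discriminate. }
    specialize (H0 Hcomp 0%nat).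
    change (Rbar_le (lam v) (Finite (mu G (outcome G (dev G sg' i s) v) i))) in H0.
    assert (Hub : Rbar_le (Finite (mu G (outcome G (dev G sg' i s) v) i))
        (Lub_Rbar (fun r => exists s0, valid_strategy G i s0 /\ r = mu G (outcome G (dev G sg' i s0) v) i))).
    { apply (proj1 (Lub_Rbar_correct _)). exists s. auto. }
    apply Rbar_le_trans with (lam v).
    + destruct (lam v); simpl; auto; lra.
    + exact (Rbar_le_trans _ _ _ H0 Hub).
  -
    assert (Hk : forall h, is_history_from G v0 (h ++ [v]) ->
              Rbar_le (nego G lam v) (Finite (mu G (outcome G (restrict G sg h) v) i + eps))).
    { intros h Hh. unfold nego. fold i.
      eapply Rbar_le_trans. apply (proj1 (glb_correct _)).
      exists (restrict G sg h). split. 2: reflexivity.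
      { split. intros j _. apply valid_restrict; auto.
        exists (restrict G sg h i). split. apply valid_restrict; auto.
        intros h' w Hh' _.
        replace (restrict G (dev G (restrict G sg h) i (restrict G sg h i)) h')
          with (restrict G sg (h ++ h')).
        2:{ unfold restrict, restrict_s, dev. apply functional_extensionality. intro j.
            apply functional_extensionality. intro l.
            destruct (Pl_eq_dec G j i); subst; rewrite app_assoc; reflexivity. }
        apply Hcons. destruct Hh' as [Hp' Hd'].
        destruct h' as [|a h'].
        - simpl in Hd'. injection Hd' as ->. rewrite app_nil_r. exact Hh.
        - simpl in Hd'. injection Hd' as ->. rewrite <- app_assoc. simpl.
          apply hist_concat; auto. }
      apply (proj2 (Lub_Rbar_correct _)). intros r [s [Hs ->]].
      simpl.
      set (s' := fun l : list (Vx G) => if Nat.ltb (length h) (length l)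
                   then s (skipn (length h) l) else sg i l).
      assert (Hs' : valid_strategy G i s').
      { intros h0 w Hw. unfold s'. destruct (Nat.ltb_spec (length h) (length (h0 ++ [w]))) as [Hl|Hl].
        - rewrite skipn_app. rewrite length_app in Hl. simpl in Hl.
          replace (length h - length h0)%nat with 0%nat by lia. simpl. apply Hs; auto.
        - apply Hval; auto. }
      assert (Hsp := HSPE h v Hh i s' Hs').
      assert (Heq : outcome G (dev G (restrict G sg h) i (restrict_s G s' h)) v =
                    outcome G (dev G (restrict G sg h) i s) v).
      { apply outcome_ext. intros j l Hl. unfold dev.
        destruct (Pl_eq_dec G j i); [|reflexivity].
        unfold restrict_s, s'. rewrite length_app.
        destruct (Nat.ltb_spec (length h) (length h + length l)) as [H|H].
        - rewrite skipn_app, skipn_all, Nat.sub_diag. reflexivity.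
        - destruct l; [congruence|simpl in H; lia]. }
      rewrite Heq in Hsp. destruct Hh as [Hp _].
      rewrite (PI_use G h v _ PI Hp) in Hsp.
      2:{ apply outcome_play. apply valid_dev. apply valid_restrict; auto. auto. }
      2:reflexivity.
      rewrite (PI_use G h v _ PI Hp) in Hsp.
      2:{ apply outcome_play. apply valid_restrict; auto. }
      2:reflexivity.
      exact Hsp. }
    destruct (nego G lam v) as [r| |] eqn:En.
    + assert (Hlb : Rbar_le (Finite (r - eps)) (lam v)).
      { apply (proj2 (glb_correct _)). intros x [h [Hh ->]].
        specialize (Hk h Hh). simpl in *. fold i. lra. }
      destruct (lam v) as [g| |]; simpl in *; auto; lra.
    + destruct (Classical_Prop.classic (exists h, is_history_from G v0 (h ++ [v]))) as [[h Hh]|Hno].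
      * specialize (Hk h Hh). simpl in Hk. contradiction.
      * assert (Hl : Rbar_le p_infty (lam v)).
        { apply (proj2 (glb_correct _)). intros x [h [Hh _]]. exfalso. eauto. }
        destruct (lam v); simpl in *; tauto.
    + exact I.
Qed.
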